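(* Let $n$ be a positive integer and $m=n+1$. Then for every zero-normalized $\Gamma_{m,n}$-semimodule $\Delta$, the Young diagrams $G_{n+1}(\Delta)$ and $G_n(\Delta)$ coincide (as partitions, i.e. ignoring columns of height zero).
   Context: Let $m,n$ be coprime positive integers and $\Gamma=\{am+bn:a,b\in\mathbb{Z}_{\ge0}\}$. A $\Gamma$-semimodule is $\Delta\subset\mathbb{Z}_{\ge0}$ with $\Delta+\Gamma\subset\Delta$; zero-normalized means $\min\Delta=0$. For $p\in\{m,n\}$, a $p$-generator of $\Delta$ is $a\in\Delta$ with $a-p\notin\Delta$; there are exactly $p$ of them. With $a_1<\dots<a_m$ the $m$-generators and $b_1<\dots<b_n$ the $n$-generators, put $g_m(x)=\#(([x,x+n)\cap\mathbb{Z})\setminus\Delta)$, $g_n(x)=\#(([x,x+m)\cap\mathbb{Z})\setminus\Delta)$. $G_m(\Delta)$ is the Young diagram with column heights $g_m(a_1)\ge\dots\ge g_m(a_m)$, and $G_n(\Delta)$ is the Young diagram with column heights $g_n(b_1)\ge\dots\ge g_n(b_n)$. *)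

(* Defs.v *)
From mathcomp Require Import all_boot.
Set Implicit Arguments. Unset Strict Implicit. Unset Printing Implicit Defensive.

(* A subset Delta of Z_{>=0} is represented by a boolean predicate on nat. *)

Definition inGamma (m n x : nat) : Prop := exists a b : nat, x = a * m + b * n.

Definition is_semimodule (m n : nat) (D : pred nat) : Prop :=
  forall x g, D x -> inGamma m n g -> D (x + g).

(* min Delta = 0 (for a subset of Z_{>=0} this is just 0 \in Delta) *)
Definition zero_normalized (D : pred nat) : Prop := D 0.

(* a is a p-generator: a \in Delta and a - p \notin Delta
   (a - p < 0 is automatically outside Delta \subset Z_{>=0}) *)
Definition is_gen (D : pred nat) (p a : nat) : bool :=
  D a && ((a < p) || ~~ D (a - p)).

(* For a zero-normalized
   Gamma_{m,n}-semimodule every p-generator (p \in {m,n}) is < m*n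
   (it is the minimum of its residue class mod p, which contains one of
   0, q, 2q, ..., (p-1)q with q the other generator), so scanning
   [0, m*n) enumerates all of them. *)
Definition gens (m n : nat) (D : pred nat) (p : nat) : seq nat :=
  [seq a <- iota 0 (m * n) | is_gen D p a].

Definition gapcount (D : pred nat) (len x : nat) : nat :=
  count (fun y => ~~ D y) (iota x len).

Definition partition_of (hs : seq nat) : seq nat :=
  sort geq [seq h <- hs | h != 0].

Definition G_m (m n : nat) (D : pred nat) : seq nat :=
  partition_of [seq gapcount D n a | a <- gens m n D m].

Definition G_n (m n : nat) (D : pred nat) : seq nat :=
  partition_of [seq gapcount D m b | b <- gens m n D n].

(* Main.v *)
Require Import Defs.
From mathcomp Require Import all_boot.
From mathcomp Require Import zify.

Lemma comb (d0 d1 d2 a c : bool) (f0 f1 f2 fp k : nat) :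
 (~~a -> d0) -> (~~c -> d2) -> (d0 -> f1 = f0) -> (d1 -> f2 = f1) -> (d1 -> fp = f1) ->
 (d0 && (f0==k) && d1 && (f1==k)) + (d1 && a && (f1 == k)) + (d1 && d2 && (d1 && c) && (f1==k)) =
 (d1 && c && (fp==k)) + (d1 && (f1==k) && d2 && (f2==k)) + (d0 && d1 && (d0 && a) && (f0==k)).
Proof.
case: d0 d1 d2 a c => [] [] [] [] [] H1 H2 H3 H4 H5;
try rewrite (H5 isT); try rewrite (H4 isT); try rewrite (H3 isT).
all: try (by have := H1 isT); try (by have := H2 isT).
all: by case: (f1 == k); case: (f0 == k).
Qed.

Lemma addn_D {n D} : is_semimodule n.+1 n D -> forall x, D x -> D (x + n).
Proof. move=> H x Dx; apply: H Dx _; exists 0, 1; by rewrite mul0n mul1n. Qed.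

Lemma addm_D {n D} : is_semimodule n.+1 n D -> forall x, D x -> D (x + n.+1).
Proof. move=> H x Dx; apply: H Dx _; exists 1, 0; by rewrite mul0n mul1n addn0. Qed.

Lemma gap_shift {n D} : is_semimodule n.+1 n D -> forall x, D x ->
  gapcount D n x.+1 = gapcount D n x.
Proof.
move=> HD x Dx; rewrite /gapcount.
have e2: iota x n.+1 = iota x n ++ [:: x + n] by rewrite -addn1 iotaD.
have := congr1 (count (fun y => ~~ D y)) e2.
by rewrite /= count_cat /= Dx (addn_D HD x Dx) /= !addn0 add0n.
Qed.

Lemma gap_m {n D} : is_semimodule n.+1 n D -> forall x, D x ->
  gapcount D n.+1 x = gapcount D n x.
Proof.
move=> HD x Dx; rewrite /gapcount.
by rewrite -addn1 iotaD count_cat /= (addn_D HD x Dx) /= !addn0.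
Qed.

Lemma big_in n D : 0 < n -> is_semimodule n.+1 n D -> D 0 ->
  forall x, n * n.-1 <= x -> D x.
Proof.
move=> n0 HD H0 x Hx.
have -> : x = 0 + x by [].
apply: HD H0 _.
have Hq : n.-1 <= x %/ n.
  by rewrite -{1}(mulKn n.-1 n0); exact: leq_div2r.
have Hr : x %% n <= n.-1 by have := ltn_pmod x n0; lia.
exists (x %% n), (x %/ n - x %% n).
rewrite {1}(divn_eq x n) mulnBl mulnSr.
have : x %% n * n <= x %/ n * n by apply: leq_mul => //; lia.
lia.
Qed.

Definition Pp n D k x := is_gen D n.+1 x && (gapcount D n x == k).
Definition Qp n D k x := is_gen D n x && (gapcount D n.+1 x == k).
Definition Sx n D k x := (0 < x) && D x.-1 && (gapcount D n x.-1 == k) && D x && (gapcount D n x == k).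
Definition Tx n D k x := D x && D x.+1 && is_gen D n x && (gapcount D n x == k).
Definition Tx' n D k x := (0 < x) && Tx n D k x.-1.

Lemma pointwise n D k : 0 < n -> is_semimodule n.+1 n D -> D 0 -> forall x,
  Sx n D k x + Pp n D k x + Tx n D k x = Qp n D k x + Sx n D k x.+1 + Tx' n D k x.
Proof.
move=> n0 HD H0 [|y].
  rewrite /Sx /Pp /Tx /Qp /Tx' /is_gen /= H0 n0 /=.
  rewrite (gap_shift HD 0 H0) (gap_m HD 0 H0).
  by case: (D 1); case: (gapcount D n 0 == k).
rewrite /Sx /Pp /Tx /Qp /Tx' /is_gen /= subSS.
apply: comb.
- rewrite negb_or negbK => /andP[Hy Hd].
  have := addn_D HD _ Hd; rewrite subnK //; lia.
- rewrite negb_or negbK => /andP[Hy Hd].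
  have := addm_D HD _ Hd; rewrite addnS subnK //; lia.
- exact: gap_shift HD y.
- exact: gap_shift HD y.+1.
- exact: gap_m HD y.+1.
Qed.

Lemma tele n D k : 0 < n -> is_semimodule n.+1 n D -> D 0 -> forall N,
  count (Pp n D k) (iota 0 N) + Tx' n D k N = count (Qp n D k) (iota 0 N) + Sx n D k N.
Proof.
move=> n0 HD H0; elim=> [|N IH]; first by [].
have := @pointwise n D k n0 HD H0 N.
have E : Tx' n D k N.+1 = Tx n D k N by [].
rewrite -addn1 iotaD !count_cat /= add0n addn1 E.
lia.
Qed.

Lemma gap0 n D : 0 < n -> is_semimodule n.+1 n D -> D 0 -> forall x,
  n * n.-1 <= x -> gapcount D n x = 0.
Proof.
move=> n0 HD H0 x Hx; rewrite /gapcount.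
rewrite (eq_in_count (a2 := pred0)) ?count_pred0 // => y.
rewrite mem_iota => /andP[h _] /=.
by rewrite (@big_in n D n0 HD H0 y) //; apply: leq_trans Hx h.
Qed.

Theorem mainTheorem6 (n : nat) (D : pred nat) :
  0 < n ->
  is_semimodule n.+1 n D ->
  zero_normalized D ->
  G_m n.+1 n D = G_n n.+1 n D.
Proof.
move=> n0 HD H0; rewrite /zero_normalized in H0.
rewrite /G_m /G_n /partition_of /gens.
apply/perm_sortP.
- by move=> x y; apply: leq_total.
- by move=> x y z h1 h2; apply: leq_trans h2 h1.
- by move=> x y /andP[a b]; apply/anti_leq/andP.
rewrite /perm_eq; apply/allP => k _ /=; apply/eqP.
rewrite !count_filter !count_map !count_filter.
case: k => [|k].
  rewrite !(@eq_count _ _ pred0) ?count_pred0 // => x /=; by rewrite andbN.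
have -> : count (predI (preim (gapcount D n) (predI (pred1 k.+1) (fun h => h != 0)))
   (is_gen D n.+1)) (iota 0 (n.+1 * n)) = count (Pp n D k.+1) (iota 0 (n.+1 * n)).
  apply: eq_count => x; rewrite /Pp /=; case: eqP => [->|_] /=; by rewrite ?andbT ?andbF.
have -> : count (predI (preim (gapcount D n.+1) (predI (pred1 k.+1) (fun h => h != 0)))
   (is_gen D n)) (iota 0 (n.+1 * n)) = count (Qp n D k.+1) (iota 0 (n.+1 * n)).
  apply: eq_count => x; rewrite /Qp /=; case: eqP => [->|_] /=; by rewrite ?andbT ?andbF.
have := @tele n D k.+1 n0 HD H0 (n.+1 * n).
have G : gapcount D n (n.+1 * n).-1 = 0.
  apply: (@gap0 n D n0 HD H0); rewrite mulSn; case: n n0 {HD} => //= n' _; lia.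
rewrite /Tx' /Tx /Sx G /= !andbF /= !addn0.
done.
Qed.
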